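(* Let $P$ be a primitive monoid containing order-ideals $I,I'$ with $I\cap I'=0$, and let $\varphi\colon I\to I'$ be a monoid isomorphism. Let $Q$ be the crowned pushout of $(P,I,I',\varphi)$ with projection $\pi\colon P\to Q$. Then $Q$ is a primitive monoid, $\pi$ maps $\mathbb P(P)\setminus\mathbb P(I')$ bijectively onto $\mathbb P(Q)$, and under this identification the order on $\mathbb P(Q)$ is the one generated by the order of $\mathbb P(P)$ restricted to $\mathbb P(P)\setminus\mathbb P(I')$ together with the additional relations $p<q$ whenever $p\in\mathbb P(I)$, $q\in\mathbb P(P)\setminus(\mathbb P(I)\sqcup\mathbb P(I'))$ and $\varphi(p)<q$ in $\mathbb P(P)$. Moreover, a prime $p\in\mathbb P(Q)$ is free in $Q$ if and only if it is free in $P$.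
   Context: Monoids are abelian. Algebraic preorder: $x\le y$ iff $y=x+z$. A prime is $p$ with $p\not\le0$ and $p\le a+b\Rightarrow p\le a$ or $p\le b$; a primitive monoid is an antisymmetric ($\le$ a partial order), primely generated (every element a sum of primes) refinement monoid; $\mathbb P(M)$ denotes its set of primes ordered by the algebraic order, and for an order-ideal $S$, $\mathbb P(S)=\mathbb P(M)\cap S$. A prime $p$ is free if $p+p\ne p$. An order-ideal is a nonempty $I$ with $x+y\in I\iff x,y\in I$. The crowned pushout of $(P,I,I',\varphi)$ is the coequalizer, in the category of monoids, of the inclusion $I\to P$ and the composite $I\xrightarrow{\varphi}I'\hookrightarrow P$. *)

(* Defs.v *)
(* Commutative monoids are MathComp [nmodType]s
   (additive commutative monoids: 0, +). *)
From HB Require Import structures.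
From mathcomp Require Import all_boot all_order all_algebra.
From Stdlib Require Import Relations.
Set Implicit Arguments. Unset Strict Implicit. Unset Printing Implicit Defensive.
Import GRing.Theory.
Local Open Scope ring_scope.

Section MonoidDefs.
Variable M : nmodType.

Definition alg_le (x y : M) : Prop := exists z : M, y = x + z.

Definition alg_lt (x y : M) : Prop := alg_le x y /\ x <> y.

Definition is_prime (p : M) : Prop :=
  ~ alg_le p 0 /\ forall a b : M, alg_le p (a + b) -> alg_le p a \/ alg_le p b.

Definition is_free (p : M) : Prop := p + p <> p.

Definition antisymmetric_monoid : Prop :=
  forall x y : M, alg_le x y -> alg_le y x -> x = y.

Definition primely_generated : Prop :=
  forall x : M, exists s : seq M,
    (forall p, p \in s -> is_prime p) /\ x = \sum_(p <- s) p.

Definition refinement_monoid : Prop :=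
  forall a0 a1 b0 b1 : M, a0 + a1 = b0 + b1 ->
    exists c00 c01 c10 c11 : M,
      [/\ a0 = c00 + c01, a1 = c10 + c11, b0 = c00 + c10 & b1 = c01 + c11].

Definition primitive_monoid : Prop :=
  [/\ antisymmetric_monoid, primely_generated & refinement_monoid].

Definition order_ideal (I : M -> Prop) : Prop :=
  (exists x, I x) /\ forall x y : M, I (x + y) <-> (I x /\ I y).

End MonoidDefs.

Definition monoid_morph (M N : nmodType) (f : M -> N) : Prop :=
  f 0 = 0 /\ forall x y, f (x + y) = f x + f y.

(* phi : P -> P restricted to I is a monoid isomorphism I -> I' *)
Definition ideal_iso (P : nmodType) (I I' : P -> Prop) (phi : P -> P) : Prop :=
  [/\ phi 0 = 0,
      (forall x y, I x -> I y -> phi (x + y) = phi x + phi y),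
      (forall x, I x -> I' (phi x)),
      (forall x y, I x -> I y -> phi x = phi y -> x = y) &
      (forall y, I' y -> exists2 x, I x & phi x = y)].

(* (Q, pi) is the crowned pushout of (P, I, I', phi): the coequalizer, in the
   category of (commutative) monoids, of the inclusion I -> P and the composite
   I -> I' -> P. *)
Definition crowned_pushout (P : nmodType) (I I' : P -> Prop) (phi : P -> P)
    (Q : nmodType) (pi : P -> Q) : Prop :=
  [/\ monoid_morph pi,
      (forall x, I x -> pi x = pi (phi x)) &
      (forall (N : nmodType) (f : P -> N), monoid_morph f ->
         (forall x, I x -> f x = f (phi x)) ->
         exists g : Q -> N,
           [/\ monoid_morph g, (forall x, g (pi x) = f x) &
               (forall g' : Q -> N, monoid_morph g' ->
                  (forall x, g' (pi x) = f x) -> forall y, g' y = g y)])].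

Definition S_primes (P : nmodType) (I' : P -> Prop) (p : P) : Prop :=
  is_prime p /\ ~ I' p.

Definition gen_rel (P : nmodType) (I I' : P -> Prop) (phi : P -> P) (p q : P)
    : Prop :=
  [/\ S_primes I' p, S_primes I' q &
      (alg_le p q \/
       [/\ I p, ~ I q, ~ I' q & alg_lt (phi p) q])].

Definition gen_order (P : nmodType) (I I' : P -> Prop) (phi : P -> P) :
  P -> P -> Prop := clos_refl_trans P (gen_rel I I' phi).

(* Main.v *)
Require Import Defs.
From HB Require Import structures.
From mathcomp Require Import all_boot all_order all_algebra.
From Stdlib Require Import Classical ClassicalEpsilon FunctionalExtensionality PropExtensionality Relations.
Set Implicit Arguments. Unset Strict Implicit. Unset Printing Implicit Defensive.
Import GRing.Theory.
Local Open Scope ring_scope.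

Definition bor : Type := bool.
HB.instance Definition _ := Choice.on bor.
Lemma bor_A : associative (orb : bor -> bor -> bor). Proof. exact: orbA. Qed.
Lemma bor_C : commutative (orb : bor -> bor -> bor). Proof. exact: orbC. Qed.
Lemma bor_0 : left_id (false : bor) orb. Proof. by []. Qed.
HB.instance Definition _ := GRing.isNmodule.Build bor bor_A bor_C bor_0.

Record cong (P : nmodType) := Cong {
  crel : P -> P -> Prop;
  crefl : forall x, crel x x;
  csym : forall x y, crel x y -> crel y x;
  ctrans : forall x y z, crel x y -> crel y z -> crel x z;
  cadd : forall x y z, crel x y -> crel (x + z) (y + z) }.

Definition crepr (P : nmodType) (c : cong P) (x : P) : P :=
  epsilon (inhabits 0) (fun y => crel c x y).
Lemma crepr_rel (P : nmodType) (c : cong P) x : crel c x (crepr c x).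
Proof. rewrite /crepr; apply: (epsilon_spec (inhabits 0) (fun y => crel c x y)). by exists x; apply: crefl. Qed.
Lemma crepr_eq (P : nmodType) (c : cong P) x y : crel c x y -> crepr c x = crepr c y.
Proof.
move=> h; rewrite /crepr; congr epsilon; apply: functional_extensionality => z.
apply: propositional_extensionality; split=> h2.
- exact: ctrans (csym h) h2.
- exact: ctrans h h2.
Qed.
Lemma crepr_idem (P : nmodType) (c : cong P) x : crepr c (crepr c x) = crepr c x.
Proof. symmetry; apply: crepr_eq; exact: crepr_rel. Qed.

Definition qT (P : nmodType) (c : cong P) := {x : P | crepr c x == x}.
HB.instance Definition _ (P : nmodType) (c : cong P) := Choice.on (qT c).
Definition qpi (P : nmodType) (c : cong P) (x : P) : qT c :=
  exist _ (crepr c x) (introT eqP (crepr_idem c x)).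
Definition qadd (P : nmodType) (c : cong P) (a b : qT c) : qT c := qpi c (val a + val b).
Lemma qpi_eq (P : nmodType) (c : cong P) x y : crel c x y -> qpi c x = qpi c y.
Proof. move=> h; apply: val_inj => /=; exact: crepr_eq. Qed.
Lemma qpi_val (P : nmodType) (c : cong P) (a : qT c) : qpi c (val a) = a.
Proof. apply: val_inj => /=; case: a => a /= /eqP; done. Qed.
Lemma crel_addl (P : nmodType) (c : cong P) x y z : crel c x y -> crel c (z + x) (z + y).
Proof. by move=> h; rewrite ![z + _]addrC; apply: cadd. Qed.
Lemma qadd_A (P : nmodType) (c : cong P) : associative (@qadd P c).
Proof.
move=> a b d; rewrite /qadd /=; apply: qpi_eq.
apply: (@ctrans _ c _ (val a + (val b + val d))).
  by apply: crel_addl; apply: csym; apply: crepr_rel.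
rewrite addrA; apply: cadd; exact: crepr_rel.
Qed.
Lemma qadd_C (P : nmodType) (c : cong P) : commutative (@qadd P c).
Proof. by move=> a b; rewrite /qadd addrC. Qed.
Definition qzero (P : nmodType) (c : cong P) : qT c := qpi c 0.
Lemma qadd_0 (P : nmodType) (c : cong P) : left_id (qzero c) (@qadd P c).
Proof.
move=> a; rewrite /qadd /=. rewrite -{2}(qpi_val a); apply: qpi_eq.
apply: (@ctrans _ c _ (0 + val a)); last by rewrite add0r; apply: crefl.
apply: cadd; apply: csym; exact: crepr_rel.
Qed.
HB.instance Definition _ (P : nmodType) (c : cong P) := GRing.isNmodule.Build (qT c) (@qadd_A P c) (@qadd_C P c) (@qadd_0 P c).

Lemma qpi_add (P : nmodType) (c : cong P) x y : qpi c (x + y) = qpi c x + qpi c y.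
Proof.
change (qpi c (x + y) = qadd (qpi c x) (qpi c y)); rewrite /qadd /=; apply: qpi_eq.
apply: (@ctrans _ c _ (crepr c x + y)); first by apply: cadd; exact: crepr_rel.
apply: crel_addl; exact: crepr_rel.
Qed.
Lemma qpi_0 (P : nmodType) (c : cong P) : qpi c 0 = 0.
Proof. by []. Qed.
Lemma qpi_inj (P : nmodType) (c : cong P) x y : qpi c x = qpi c y -> crel c x y.
Proof.
move=> /(congr1 val) /= h.
apply: (ctrans (crepr_rel c x)); rewrite h; apply: csym; exact: crepr_rel.
Qed.


Definition ninf : Type := option nat.
HB.instance Definition _ := Choice.on ninf.
Definition nadd (a b : ninf) : ninf := match a, b with Some x, Some y => Some (x + y)%N | _, _ => None end.
Lemma nadd_A : associative nadd. Proof. by case=> [a|] [b|] [c|] //=; rewrite addnA. Qed.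
Lemma nadd_C : commutative nadd. Proof. by case=> [a|] [b|] //=; rewrite addnC. Qed.
Lemma nadd_0 : left_id (Some 0%N : ninf) nadd. Proof. by case. Qed.
HB.instance Definition _ := GRing.isNmodule.Build ninf nadd_A nadd_C nadd_0.

Section Gen.
Variable M : nmodType.
Implicit Types x y z a b r : M.

Lemma le_refl x : alg_le x x. Proof. by exists 0; rewrite addr0. Qed.
Lemma le_trans x y z : alg_le x y -> alg_le y z -> alg_le x z.
Proof. by move=> [a ->] [b ->]; exists (a + b); rewrite addrA. Qed.
Lemma le_addr x y : alg_le x (x + y). Proof. by exists y. Qed.
Lemma le_addl x y : alg_le y (x + y). Proof. by exists x; rewrite addrC. Qed.
Lemma le_add a b c d : alg_le a b -> alg_le c d -> alg_le (a + c) (b + d).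
Proof. by move=> [u ->] [v ->]; exists (u + v); rewrite addrACA. Qed.
Lemma le_add2r a b c : alg_le a b -> alg_le (a + c) (b + c).
Proof. by move=> h; apply: le_add => //; apply: le_refl. Qed.
Lemma le_0 x : alg_le 0 x. Proof. by exists x; rewrite add0r. Qed.

Lemma le_mulrn r (j k : nat) : (j <= k)%N -> alg_le (r *+ j) (r *+ k).
Proof. by move=> h; exists (r *+ (k - j)); rewrite -mulrnDr subnKC. Qed.

Lemma prime_le_sum q (s : seq M) : is_prime q -> alg_le q (\sum_(p <- s) p) ->
  exists2 p, p \in s & alg_le q p.
Proof.
move=> [q0 qp]; elim: s => [|p s IH]; first by rewrite big_nil.
rewrite big_cons => /qp [h|h]; first by exists p; rewrite ?mem_head.
by case: (IH h) => p' p's hp; exists p' => //; rewrite in_cons p's orbT.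
Qed.

Lemma split_mulrn r (k : nat) x y : refinement_monoid M -> is_prime r ->
  alg_le (r *+ k) (x + y) ->
  exists k0 k1, [/\ (k0 + k1)%N = k, alg_le (r *+ k0) x & alg_le (r *+ k1) y].
Proof.
move=> ref [r0 rp]; elim: k x y => [|k IH] x y.
  by move=> _; exists 0%N, 0%N; split => //; apply: le_0.
move=> [z e]; rewrite mulrSr -addrA in e.
have [c00 [c01 [c10 [c11 [ex ey ek er]]]]] := ref _ _ _ _ e.
have hle : alg_le (r *+ k) (c00 + c10) by rewrite -ek; apply: le_refl.
have [k0 [k1 [hk h0 h1]]] := IH c00 c10 hle.
have : alg_le r (c01 + c11) by rewrite -er; apply: le_addr.
case/rp => h.

  exists (S k0); exists k1; split; first by rewrite addSn hk.
    by rewrite ex mulrSr; apply: le_add.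
  by rewrite ey; apply: le_trans h1 (le_addr _ _).
exists k0; exists (S k1); split; first by rewrite addnS hk.
  by rewrite ex; apply: le_trans h0 (le_addr _ _).
by rewrite ey mulrSr; apply: le_add.
Qed.

Definition nu_spec r x (o : ninf) : Prop :=
  match o with
  | None => forall k : nat, alg_le (r *+ k) x
  | Some m => alg_le (r *+ m) x /\ ~ alg_le (r *+ m.+1) x
  end.

Definition nu r x : ninf := epsilon (inhabits (None : ninf)) (nu_spec r x).

Lemma nu_spec_ex r x : exists o, nu_spec r x o.
Proof.
case: (classic (forall k : nat, alg_le (r *+ k) x)) => [h|]; first by exists None.
move=> /not_all_ex_not [k hk].
elim: k hk => [|k IH] hk; first by case: hk; apply: le_0.
case: (classic (alg_le (r *+ k) x)) => h; first by exists (Some k).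
exact: IH.
Qed.

Lemma nuP r x : nu_spec r x (nu r x).
Proof. rewrite /nu; apply: epsilon_spec; exact: nu_spec_ex. Qed.

Lemma nu_spec_uniq r x o o' : nu_spec r x o -> nu_spec r x o' -> o = o'.
Proof.
have key : forall m m', alg_le (r *+ m) x -> ~ alg_le (r *+ m'.+1) x -> (m <= m')%N.
  move=> m m' h1 h2; rewrite leqNgt; apply/negP => lt; apply: h2.
  exact: le_trans (le_mulrn _ lt) h1.
case: o => [m|] ; case: o' => [m'|] //=.
- by move=> [h1 h2] [h3 h4]; congr Some; apply/eqP; rewrite eqn_leq (key _ _ h1 h4) (key _ _ h3 h2).
- by move=> [h1 h2] h; case: h2; apply: h.
- by move=> h [h1 h2]; case: h2; apply: h.
Qed.

Lemma nu_eq r x o : nu_spec r x o -> nu r x = o.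
Proof. by move=> h; apply: nu_spec_uniq (nuP r x) h. Qed.

Lemma nu_add r x y : refinement_monoid M -> is_prime r ->
  nu r (x + y) = nu r x + nu r y.
Proof.
move=> ref pr; apply: nu_eq.
have := nuP r x; have := nuP r y.
case: (nu r x) => [a|]; case: (nu r y) => [b|] //=.
- move=> [hb1 hb2] [ha1 ha2]; split; first by rewrite mulrnDr; apply: le_add.
  move=> /(split_mulrn ref pr) [k0 [k1 [hk h0 h1]]].
  have k0a : (k0 <= a)%N.
    by rewrite leqNgt; apply/negP => lt; apply: ha2; apply: le_trans (le_mulrn _ lt) h0.
  have k1b : (k1 <= b)%N.
    by rewrite leqNgt; apply/negP => lt; apply: hb2; apply: le_trans (le_mulrn _ lt) h1.
  by move: (leq_add k0a k1b); rewrite hk ltnn.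
- by move=> h _ k; apply: le_trans (h k) (le_addl _ _).
- by move=> _ h k; apply: le_trans (h k) (le_addr _ _).
- by move=> _ h k; apply: le_trans (h k) (le_addr _ _).
Qed.

Lemma nu_not r x : ~ alg_le r x -> nu r x = Some 0%N.
Proof. by move=> h; apply: nu_eq; split; [apply: le_0 | rewrite mulr1n]. Qed.

Lemma nu_morph r : refinement_monoid M -> is_prime r -> monoid_morph (nu r).
Proof. by move=> ref pr; split; [apply: nu_not; case: pr | move=> x y; apply: nu_add]. Qed.

End Gen.

Definition ab (A : Prop) : bool := if excluded_middle_informative A then true else false.
Lemma abE (A : Prop) : ab A = true <-> A.
Proof. by rewrite /ab; destruct (excluded_middle_informative A). Qed.
Lemma ab_or (A B : Prop) : ab (A \/ B) = ab A || ab B.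
Proof.
rewrite /ab; destruct (excluded_middle_informative (A \/ B)); destruct (excluded_middle_informative A); destruct (excluded_middle_informative B) => //=; tauto.
Qed.
Lemma ab_iff (A B : Prop) : (A <-> B) -> ab A = ab B.
Proof. by move=> h; rewrite /ab; destruct (excluded_middle_informative A); destruct (excluded_middle_informative B) => //=; tauto. Qed.
Lemma ab_false (A : Prop) : ~ A -> ab A = false.
Proof. by rewrite /ab; destruct (excluded_middle_informative A). Qed.

Section Gen2.
Variables M N : nmodType.
Lemma morph_le (f : M -> N) x y : monoid_morph f -> alg_le x y -> alg_le (f x) (f y).
Proof. by move=> [_ fD] [z ->]; exists (f z); rewrite fD. Qed.
Lemma morph_mulrn (f : M -> N) x n : monoid_morph f -> f (x *+ n) = f x *+ n.
Proof. by move=> [f0 fD]; elim: n => [|n IH]; rewrite ?mulr0n // !mulrS fD IH. Qed.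
Lemma morph_sum (f : M -> N) (s : seq M) : monoid_morph f ->
  f (\sum_(p <- s) p) = \sum_(p <- s) f p.
Proof. by move=> [f0 fD]; elim: s => [|p s IH]; rewrite ?big_nil // !big_cons fD IH. Qed.
End Gen2.

Lemma le_sum_mem (M : nmodType) (s : seq M) q : q \in s -> alg_le q (\sum_(p <- s) p).
Proof.
elim: s => [|p s IH] //; rewrite in_cons big_cons => /orP [/eqP ->|h].
  exact: le_addr.
exact: le_trans (IH h) (le_addl _ _).
Qed.

Lemma antisym_absorb (M : nmodType) (r q : M) : antisymmetric_monoid M ->
  q = r + q + q -> r + q = q.
Proof. Abort.

Section Main.
Variables (P : nmodType) (I I' : P -> Prop) (phi : P -> P) (Q : nmodType) (pi : P -> Q).
Hypotheses (Hprim : primitive_monoid P) (HI : order_ideal I) (HI' : order_ideal I')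
  (Hdisj : forall x, I x -> I' x -> x = 0) (Hiso : ideal_iso I I' phi)
  (Hpo : crowned_pushout I I' phi pi).

Implicit Types x y z p q a b : P.

Let antiP : antisymmetric_monoid P. Proof. by case: Hprim. Qed.
Let pgenP : primely_generated P. Proof. by case: Hprim. Qed.
Let refP : refinement_monoid P. Proof. by case: Hprim. Qed.

Lemma ideal0 (J : P -> Prop) : order_ideal J -> J 0.
Proof. by case=> [[x hx] h]; have /h [] : J (x + 0) by rewrite addr0. Qed.
Lemma ideal_le (J : P -> Prop) x y : order_ideal J -> alg_le x y -> J y -> J x.
Proof. by move=> [_ h] [z ->] /h []. Qed.
Lemma idealD (J : P -> Prop) x y : order_ideal J -> J x -> J y -> J (x + y).
Proof. by move=> [_ h] hx hy; apply/h. Qed.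

Let phi0 : phi 0 = 0. Proof. by case: Hiso. Qed.
Let phiD x y : I x -> I y -> phi (x + y) = phi x + phi y. Proof. by move=> hx hy; case: Hiso => _ h _ _ _; apply: h. Qed.
Let phiI x : I x -> I' (phi x). Proof. by move=> hx; case: Hiso => _ _ h _ _; apply: h. Qed.
Let phi_inj x y : I x -> I y -> phi x = phi y -> x = y. Proof. by move=> hx hy; case: Hiso => _ _ _ h _; apply: h. Qed.
Let phi_sur y : I' y -> exists2 x, I x & phi x = y. Proof. by move=> hy; case: Hiso => _ _ _ _ h; apply: h. Qed.

Lemma phi_le x y : I x -> I y -> (alg_le (phi x) (phi y) <-> alg_le x y).
Proof.
move=> hx hy; split.
- move=> [z e]; have hz : I' z by apply: ideal_le HI' (le_addl (phi x) z) _; rewrite -e; apply: phiI.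
  case: (phi_sur hz) => w hw ew; exists w; apply: phi_inj => //; first exact: idealD.
  by rewrite phiD // ew.
- by move=> [z ez]; exists (phi z); rewrite ez phiD //; apply: ideal_le HI (le_addl x z) _; rewrite -ez.
Qed.

Lemma phi_mulrn x n : I x -> phi (x *+ n) = phi x *+ n.
Proof.
move=> hx; elim: n => [|n IH]; first by rewrite !mulr0n.
have hn : I (x *+ n) by elim: n {IH} => [|n IH]; rewrite ?mulr0n ?mulrS; [apply: ideal0 | apply: idealD].
by rewrite !mulrS phiD // IH.
Qed.

Lemma prime_nz p : is_prime p -> p <> 0.
Proof. by move=> [h _] e; apply: h; rewrite e; apply: le_refl. Qed.

Lemma prime_not_I' p : is_prime p -> I p -> ~ I' p.
Proof. by move=> hp hI hI'; apply: (prime_nz hp); apply: Hdisj. Qed.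

Lemma phi_nz p : is_prime p -> I p -> phi p <> 0.
Proof. by move=> hp hI e; apply: (prime_nz hp); apply: phi_inj => //; [apply: ideal0 | rewrite phi0]. Qed.

Lemma phi_not_I p : is_prime p -> I p -> ~ I (phi p).
Proof. by move=> hp hI h; apply: (phi_nz hp hI); apply: Hdisj => //; apply: phiI. Qed.

Lemma phi_notle p x : is_prime p -> I p -> I x -> ~ alg_le (phi p) x.
Proof. by move=> hp hI hx h; apply: (phi_not_I hp hI); apply: ideal_le HI h hx. Qed.

Lemma phi_prime p : is_prime p -> I p -> is_prime (phi p).
Proof.
move=> hp hI; split.
  by move=> h; apply: (phi_notle hp hI (ideal0 HI)).
move=> a b [z e].
have [c00 [c01 [c10 [c11 [ea eb ep ez]]]]] := refP e.
have h00 : I' c00 by apply: ideal_le HI' (le_addr c00 c10) _; rewrite -ep; apply: phiI.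
have h10 : I' c10 by apply: ideal_le HI' (le_addl c00 c10) _; rewrite -ep; apply: phiI.
case: (phi_sur h00) => d0 hd0 ed0; case: (phi_sur h10) => d1 hd1 ed1.
have epd : p = d0 + d1.
  by apply: phi_inj => //; [apply: idealD | rewrite phiD // ed0 ed1].
have : alg_le p (d0 + d1) by rewrite -epd; apply: le_refl.
case/(proj2 hp) => h.
  left; rewrite ea; apply: (le_trans _ (le_addr c00 c01)); rewrite -ed0; exact/phi_le.
right; rewrite eb; apply: (le_trans _ (le_addr c10 c11)); rewrite -ed1; exact/phi_le.
Qed.

Lemma phi_free p : I p -> is_free p -> is_free (phi p).
Proof. by move=> hI hf e; apply: hf; apply: phi_inj => //; [apply: idealD | rewrite phiD]. Qed.

Lemma prime_I'_pre q : is_prime q -> I' q ->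
  exists2 p, [/\ I p, ~ I' p & is_prime p] & phi p = q.
Proof.
move=> hq hq'; case: (phi_sur hq') => p hp ep; exists p => //.
have pnz : p <> 0 by move=> e; apply: (prime_nz hq); rewrite -ep e.
split => //; first by move=> h; apply: pnz; apply: Hdisj.
split.
  move=> [z e]; apply: (proj1 hq); exists (phi z).
  have hz : I z by apply: ideal_le HI (le_addl p _) _; rewrite -e; apply: ideal0.
  by rewrite -ep -phiD // -e.
move=> a b [z e].
have [c00 [c01 [c10 [c11 [ea eb ep' ez]]]]] := refP e.
have h00 : I c00 by apply: ideal_le HI (le_addr c00 c10) _; rewrite -ep'.
have h10 : I c10 by apply: ideal_le HI (le_addl c00 c10) _; rewrite -ep'.
have : alg_le q (phi c00 + phi c10) by rewrite -phiD // -ep' ep; apply: le_refl.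
case/(proj2 hq) => h.
  left; rewrite ea; apply: (le_trans _ (le_addr c00 c01)); apply/(phi_le hp h00); by rewrite ep.
right; rewrite eb; apply: (le_trans _ (le_addr c10 c11)); apply/(phi_le hp h10); by rewrite ep.
Qed.


Let pi_morph : monoid_morph pi. Proof. by case: Hpo. Qed.
Let pi0 : pi 0 = 0. Proof. by case: pi_morph. Qed.
Let piD x y : pi (x + y) = pi x + pi y. Proof. by case: pi_morph => _ h; apply: h. Qed.
Let pi_phi x : I x -> pi x = pi (phi x). Proof. by move=> hx; case: Hpo => _ h _; apply: h. Qed.

Lemma lift (N : nmodType) (f : P -> N) : monoid_morph f -> (forall x, I x -> f x = f (phi x)) ->
  exists g : Q -> N, monoid_morph g /\ forall x, g (pi x) = f x.
Proof. by move=> hf hi; case: Hpo => _ _ /(_ N f hf hi) [g [hg1 hg2 _]]; exists g. Qed.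

Lemma pi_surj (y : Q) : exists x, pi x = y.
Proof.
have cadd : forall x y z, pi x = pi y -> pi (x + z) = pi (y + z) by move=> x1 y1 z1 h; rewrite !piD h.
pose c := @Cong P (fun x y => pi x = pi y) (fun x => erefl) (fun x y h => esym h)
  (fun x y z h1 h2 => etrans h1 h2) cadd.
have crel_pi : forall x, pi (crepr c x) = pi x by move=> x; symmetry; exact: (crepr_rel c x).
pose k (a : qT c) := pi (val a).
have kmorph : monoid_morph k.
  split; first by rewrite /k /= crel_pi.
  by move=> a b; rewrite /k; change (pi (crepr c (val a + val b)) = pi (val a) + pi (val b)); rewrite crel_pi piD.
have fmorph : monoid_morph (qpi c) by split; [exact: qpi_0 | exact: qpi_add].
have [g [gm gE]] : exists g : Q -> qT c, monoid_morph g /\ forall x, g (pi x) = qpi c x.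
  apply: lift => // x hx; apply: qpi_eq; exact: pi_phi.
case: Hpo => _ _ /(_ Q pi pi_morph pi_phi) [g0 [_ _ uniq]].
have e1 := uniq id (conj erefl (fun _ _ => erefl)) (fun _ => erefl) y.
have kg : monoid_morph (fun u : Q => k (g u)).
  case: kmorph => k0 kD; case: gm => g0' gD; split; first by rewrite /= g0'.
  by move=> a b /=; rewrite gD kD.
have kgE : forall x, k (g (pi x)) = pi x by move=> x; rewrite gE /k /= crel_pi.
have e2 := uniq _ kg kgE y.
by exists (val (g y)); rewrite {2}e1 -e2.
Qed.

Lemma pi_le x y : alg_le x y -> alg_le (pi x) (pi y).
Proof. exact: morph_le. Qed.

Lemma prime_S q : is_prime q -> exists2 p, S_primes I' p & pi p = pi q.
Proof.
move=> hq; case: (classic (I' q)) => hq'; last by exists q.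
case: (prime_I'_pre hq hq') => p [hp hp' pp] <-; exists p => //.
exact: pi_phi.
Qed.

Definition Fp p x := alg_le p x \/ (I p /\ alg_le (phi p) x).

Lemma detect p x : S_primes I' p -> (alg_le (pi p) (pi x) <-> Fp p x).
Proof.
move=> [hp hp']; split; last first.
  case=> [h|[hI h]]; first exact: pi_le.
  by rewrite (pi_phi hI); apply: pi_le.
pose f (x : P) : bor := ab (Fp p x).
have fm : monoid_morph f.
  split.
    change (ab (Fp p 0) = false); apply: ab_false; case=> [|[hI h]]; first by case: hp.
    by case: (phi_prime hp hI).
  move=> a b; change (ab (Fp p (a + b)) = ab (Fp p a) || ab (Fp p b)).
  rewrite -ab_or; apply: ab_iff; rewrite /Fp; split.
    case=> [/(proj2 hp) [h|h]|[hI /(proj2 (phi_prime hp hI)) [h|h]]]; tauto.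
  case=> [[h|[hI h]]|[h|[hI h]]].
  - by left; apply: le_trans h (le_addr _ _).
  - by right; split => //; apply: le_trans h (le_addr _ _).
  - by left; apply: le_trans h (le_addl _ _).
  - by right; split => //; apply: le_trans h (le_addl _ _).
have finv : forall a, I a -> f a = f (phi a).
  move=> a ha; rewrite /f; apply: ab_iff; rewrite /Fp; split.
    case=> [h|[hI h]]; last by case: (phi_notle hp hI ha).
    by have hI := ideal_le HI h ha; right; split => //; apply/phi_le.
  case=> [h|[hI h]].
    by case: hp'; apply: ideal_le HI' h (phiI ha).
  by left; apply/(phi_le hI ha).
have [g [gm gE]] := lift fm finv.
move=> /(morph_le gm); rewrite !gE => -[t].
have -> : f p = true by apply/abE; left; apply: le_refl.
by move=> e; apply/abE; change (f x = true); rewrite e.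
Qed.


Definition step u v := exists c a, [/\ I a, u = c + a & v = c + phi a].

Inductive Erel : P -> P -> Prop :=
| Erefl x : Erel x x
| Estep x y z : step x y \/ step y x -> Erel y z -> Erel x z.

Lemma Etrans x y z : Erel x y -> Erel y z -> Erel x z.
Proof. by elim=> [//|x1 y1 z1 h _ IH] /IH; apply: Estep. Qed.

Lemma Eone x y : step x y \/ step y x -> Erel x y.
Proof. by move=> h; apply: Estep h (Erefl _). Qed.

Lemma Esym x y : Erel x y -> Erel y x.
Proof.
elim=> [x1|x1 y1 z1 h _ IH]; first exact: Erefl.
by apply: Etrans IH (Eone _); case: h; tauto.
Qed.

Lemma step_add x y w : step x y -> step (x + w) (y + w).
Proof. by move=> [c [a [ha -> ->]]]; exists (c + w), a; split => //; rewrite addrAC. Qed.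

Lemma Eadd x y w : Erel x y -> Erel (x + w) (y + w).
Proof.
elim=> [x1|x1 y1 z1 h _ IH]; first exact: Erefl.
by apply: Estep IH; case: h => h; [left|right]; apply: step_add.
Qed.

Lemma step_pi x y : step x y -> pi x = pi y.
Proof. by move=> [c [a [ha -> ->]]]; rewrite !piD (pi_phi ha). Qed.

Lemma E_pi x y : Erel x y -> pi x = pi y.
Proof. by elim=> // x1 y1 z1 [h|h] _ <-; [|symmetry]; apply: step_pi. Qed.

Lemma pi_E x y : pi x = pi y -> Erel x y.
Proof.
pose c := @Cong P Erel Erefl Esym Etrans Eadd.
have fmorph : monoid_morph (qpi c) by split; [exact: qpi_0 | exact: qpi_add].
have [g [gm gE]] : exists g : Q -> qT c, monoid_morph g /\ forall x, g (pi x) = qpi c x.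
  apply: lift => // a ha; apply: qpi_eq; apply: Eone; left.
  by exists 0, a; rewrite !add0r.
move=> e; apply: (@qpi_inj _ c); by rewrite -!gE e.
Qed.

Lemma step_lift u v a0 a1 : step u v \/ step v u -> u = a0 + a1 ->
  exists a0' a1', [/\ Erel a0 a0', Erel a1 a1' & v = a0' + a1'].
Proof.
case=> [[c [a [ha -> ->]]]|[c [a [ha -> ->]]]] e.
- have [d00 [d01 [d10 [d11 [e0 e1 ec ea]]]]] := refP (esym e).
  have h01 : I d01 by apply: ideal_le HI (le_addr d01 d11) _; rewrite -ea.
  have h11 : I d11 by apply: ideal_le HI (le_addl d01 d11) _; rewrite -ea.
  exists (d00 + phi d01), (d10 + phi d11); split.
  + by apply: Eone; left; exists d00, d01; split.
  + by apply: Eone; left; exists d10, d11; split.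
  + by rewrite ec ea phiD // addrACA.
- have [d00 [d01 [d10 [d11 [e0 e1 ec ea]]]]] := refP (esym e).
  have h01 : I' d01 by apply: ideal_le HI' (le_addr d01 d11) _; rewrite -ea; apply: phiI.
  have h11 : I' d11 by apply: ideal_le HI' (le_addl d01 d11) _; rewrite -ea; apply: phiI.
  case: (phi_sur h01) => f0 hf0 ef0; case: (phi_sur h11) => f1 hf1 ef1.
  have eaf : a = f0 + f1.
    by apply: phi_inj => //; [apply: idealD | rewrite phiD // ef0 ef1].
  exists (d00 + f0), (d10 + f1); split.
  + by apply: Eone; right; exists d00, f0; split => //; rewrite e0 ef0.
  + by apply: Eone; right; exists d10, f1; split => //; rewrite e1 ef1.
  + by rewrite ec eaf addrACA.
Qed.

Lemma E_lift u v : Erel u v -> forall a0 a1, u = a0 + a1 ->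
  exists a0' a1', [/\ Erel a0 a0', Erel a1 a1' & v = a0' + a1'].
Proof.
elim=> [x a0 a1 e|x y z h _ IH a0 a1 e].
  by exists a0, a1; split => //; apply: Erefl.
have [b0 [b1 [h0 h1 ey]]] := step_lift h e.
have [c0 [c1 [h0' h1' ez]]] := IH _ _ ey.
by exists c0, c1; split => //; apply: Etrans; eauto.
Qed.

Lemma refQ : refinement_monoid Q.
Proof.
move=> A0 A1 B0 B1.
case: (pi_surj A0) => a0 <-; case: (pi_surj A1) => a1 <-.
case: (pi_surj B0) => b0 <-; case: (pi_surj B1) => b1 <-.
rewrite -!piD => /pi_E /E_lift /(_ a0 a1 erefl) [a0' [a1' [h0 h1 e]]].
have [c00 [c01 [c10 [c11 [e0 e1 e2 e3]]]]] := refP (esym e).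
exists (pi c00), (pi c01), (pi c10), (pi c11); split; rewrite -piD.
- by rewrite -e0; apply: E_pi.
- by rewrite -e1; apply: E_pi.
- by rewrite -e2.
- by rewrite -e3.
Qed.


Lemma Imulrn r n : I r -> I (r *+ n).
Proof. by move=> hr; elim: n => [|n IH]; rewrite ?mulr0n ?mulrS; [apply: ideal0 | apply: idealD]. Qed.

Lemma nu_phi r x : I r -> I x -> nu (phi r) (phi x) = nu r x.
Proof.
move=> hr hx; apply: nu_eq; have := nuP r x.
case: (nu r x) => [m|] /=.
  move=> [h1 h2]; split; first by rewrite -phi_mulrn //; apply/(phi_le (@Imulrn r m hr) hx).
  by rewrite -phi_mulrn // => h; apply: h2; apply/(phi_le (@Imulrn r m.+1 hr) hx).
by move=> h k; rewrite -phi_mulrn //; apply/(phi_le (@Imulrn r k hr) hx).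
Qed.

Lemma big_le_two r (s : seq P) k : is_prime r -> (size s < k)%N ->
  alg_le (r *+ k) (\sum_(q <- s) q) -> exists2 q, q \in s & alg_le (r *+ 2) q.
Proof.
move=> pr; elim: s k => [|q s IH] k /=.
  move=> hk; rewrite big_nil => h; case: (proj1 pr).
  by apply: le_trans h; rewrite -{1}(mulr1n r); apply: le_mulrn.
move=> hk; rewrite big_cons => /(split_mulrn refP pr) [k0 [k1 [ek h0 h1]]].
case: (leqP 2 k0) => h2.
  by exists q; [rewrite mem_head | apply: le_trans (le_mulrn _ h2) h0].
have [q' q's hq'] : exists2 q', q' \in s & alg_le (r *+ 2) q'.
  apply: (IH k1) => //.
  have hk' : ((size s).+2 <= k0 + k1)%N by rewrite ek.
  have h3 : (k0 + k1 <= 1 + k1)%N by rewrite leq_add2r.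
  by move: (leq_trans hk' h3); rewrite add1n ltnS.
by exists q' => //; rewrite in_cons q's orbT.
Qed.

Lemma free_absorb r x : is_prime r -> is_free r -> (forall k : nat, alg_le (r *+ k) x) ->
  exists q, alg_le q x /\ r + q = q.
Proof.
move=> pr fr; case: (pgenP x) => s [sp ->] hk.
have [q qs hq] := big_le_two pr (ltnSn (size s)) (hk _).
exists q; split; first exact: le_sum_mem.
have qp := sp _ qs.
move: hq; rewrite mulr2n => -[w ew].
have : alg_le q (r + (r + w)) by rewrite addrA -ew; apply: le_refl.
case/(proj2 qp) => [h|].
  exfalso; apply: fr; apply: antiP; last by apply: le_addr.
  have e : r = q by apply: antiP => //; rewrite ew -addrA; apply: le_addr.
  by rewrite {3}e ew; apply: le_addr.
case/(proj2 qp) => h.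
  exfalso; apply: fr; apply: antiP; last by apply: le_addr.
  have e : r = q by apply: antiP => //; rewrite ew -addrA; apply: le_addr.
  by rewrite {3}e ew; apply: le_addr.
case: h => w' ew'.
apply: antiP; last by apply: le_addl.
by exists (r + w'); rewrite {1}ew ew' addrACA.
Qed.

Lemma nu_self (s : P) : is_prime s -> is_free s -> nu s s = Some 1%N.
Proof.
move=> ps fs; apply: nu_eq; split; first by rewrite mulr1n; apply: le_refl.
rewrite mulr2n => h; apply: fs; apply: antiP => //; exact: le_addr.
Qed.

Lemma detect_free (s : P) : S_primes I' s -> is_free s ->
  exists g : Q -> ninf, [/\ monoid_morph g, g (pi s) = Some 1%N &
    forall x, g (pi x) = None -> exists q, alg_le q x /\ pi s + pi q = pi q].
Proof.
move=> [ps ps'] fs.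
have ns : forall a, I a -> ~ alg_le s (phi a).
  by move=> a ha h; apply: ps'; apply: ideal_le HI' h (phiI ha).
case: (classic (I s)) => hs.
- pose f x := nu s x + nu (phi s) x.
  have fm : monoid_morph f.
    have [m10 m1D] := nu_morph refP ps; have [m20 m2D] := nu_morph refP (phi_prime ps hs).
    by split; [rewrite /f m10 m20 addr0 | move=> a b; rewrite /f m1D m2D addrACA].
  have finv : forall a, I a -> f a = f (phi a).
    move=> a ha; rewrite /f nu_phi // (nu_not (phi_notle ps hs ha)) (nu_not (ns a ha)).
    by rewrite addrC.
  have [g [gm gE]] := lift fm finv.
  exists g; split => //.
    rewrite gE /f nu_self // nu_not //.
    by move=> h; apply: (phi_not_I ps hs); apply: ideal_le HI h hs.
  move=> x; rewrite gE /f.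
  have := nuP s x; have := nuP (phi s) x.
  case: (nu s x) => [a|]; case: (nu (phi s) x) => [b|] //= h2 h1 _.
  + have [q [hq e]] := free_absorb (phi_prime ps hs) (phi_free hs fs) h2.
    by exists q; split => //; rewrite (pi_phi hs) -piD e.
  + have [q [hq e]] := free_absorb ps fs h1.
    by exists q; split => //; rewrite -piD e.
  + have [q [hq e]] := free_absorb ps fs h1.
    by exists q; split => //; rewrite -piD e.
- pose f x := nu s x.
  have fm : monoid_morph f by apply: nu_morph.
  have finv : forall a, I a -> f a = f (phi a).
    move=> a ha; rewrite /f (nu_not (ns a ha)) nu_not //.
    by move=> h; apply: hs; apply: ideal_le HI h ha.
  have [g [gm gE]] := lift fm finv.
  exists g; split => //; first by rewrite gE /f nu_self.
  move=> x; rewrite gE /f => e.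
  have := nuP s x; rewrite e /= => h1.
  have [q [hq e']] := free_absorb ps fs h1.
  by exists q; split => //; rewrite -piD e'.
Qed.


Lemma S_pi_prime p : S_primes I' p -> is_prime (pi p).
Proof.
move=> hS; have [hp hp'] := hS; split.
  rewrite -pi0 => /(detect _ hS) [h|[hI h]]; first by case: hp.
  by case: (phi_prime hp hI).
move=> A B; case: (pi_surj A) => a <-; case: (pi_surj B) => b <-.
rewrite -piD => /(detect _ hS) h.
suff : Fp p a \/ Fp p b by case=> h'; [left|right]; apply/(detect _ hS).
case: h => [/(proj2 hp) [h|h]|[hI /(proj2 (phi_prime hp hI)) [h|h]]]; rewrite /Fp; tauto.
Qed.

Lemma prime_pi q : is_prime q -> is_prime (pi q).
Proof. by move=> /prime_S [p hp <-]; apply: S_pi_prime. Qed.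

Lemma absorb_n (X T : Q) n : X = X + T -> X = X + T *+ n.
Proof.
move=> e; elim: n => [|n IH]; first by rewrite mulr0n addr0.
by rewrite mulrS addrA -e.
Qed.

Lemma ninf_n n : (Some 1%N : ninf) *+ n = Some n.
Proof. by elim: n => [//|n IH]; rewrite mulrS IH. Qed.

Lemma absorb_prime (X T : Q) s : S_primes I' s -> X = X + T -> alg_le (pi s) T -> X = X + pi s.
Proof.
move=> hS eX [R eT].
have hn : forall n, alg_le (pi s *+ n) X.
  move=> n; exists (X + R *+ n).
  by rewrite {1}(absorb_n n eX) eT mulrnDl addrCA.
case: (classic (is_free s)) => fs.
- have [g [gm g1 gN]] := detect_free hS fs.
  case: (pi_surj X) => x ex.
  case E: (g (pi x)) => [m|].
    exfalso; have [Z eZ] := hn m.+1.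
    move: E; rewrite ex eZ (proj2 gm) (morph_mulrn _ _ gm) g1 ninf_n.
    by case: (g Z) => [k|] //= [e]; move: (leq_addr k m.+1); rewrite e ltnn.
  have [q [hq e]] := gN x E; case: hq => w ew.
  by rewrite -ex ew piD addrAC [pi q + pi s]addrC e.
have ss : s + s = s by apply: NNPP.
have [Z eZ] := hn 1%N; rewrite mulr1n in eZ.
by rewrite eZ addrAC -piD ss.
Qed.

Lemma absorb (X T W : Q) : X = X + T -> alg_le W T -> X = X + W.
Proof.
move=> eX hW; case: (pi_surj W) => w ew; case: (pgenP w) => l [lp el].
have key : forall q, q \in l -> X = X + pi q.
  move=> q ql; have [p hp ep] := prime_S (lp _ ql); rewrite -ep.
  apply: absorb_prime eX _ => //; rewrite ep; apply: le_trans hW.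
  by rewrite -ew el; apply: pi_le; apply: le_sum_mem.
rewrite -ew el (morph_sum _ pi_morph).
elim: l {lp el} key => [|q l IH] key; first by rewrite big_nil addr0.
rewrite big_cons addrA -key ?mem_head //; apply: IH => q' q'l.
by apply: key; rewrite in_cons q'l orbT.
Qed.

Lemma antiQ : antisymmetric_monoid Q.
Proof.
move=> X Y [Z eY] [W eX].
have e : X = X + (Z + W) by rewrite addrA -eY -eX.
by rewrite eY -(absorb e (le_addr Z W)).
Qed.

Lemma pgenQ : primely_generated Q.
Proof.
move=> X; case: (pi_surj X) => x <-; case: (pgenP x) => l [lp ->].
exists [seq pi q | q <- l]; split.
  by move=> p /mapP [q ql ->]; apply: prime_pi; apply: lp.
by rewrite big_map (morph_sum _ pi_morph).
Qed.


Lemma main_all :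
  primitive_monoid Q /\
      (forall p, S_primes I' p -> is_prime (pi p)) /\
      (forall p q, S_primes I' p -> S_primes I' q -> pi p = pi q -> p = q) /\
      (forall q : Q, is_prime q -> exists2 p, S_primes I' p & pi p = q) /\
      (forall p q, S_primes I' p -> S_primes I' q ->
         (alg_le (pi p) (pi q) <-> gen_order I I' phi p q)) /\
      (forall p, S_primes I' p -> (is_free (pi p) <-> is_free p)).
Proof.
split; first by split; [exact: antiQ | exact: pgenQ | exact: refQ].
split; first exact: S_pi_prime.
split.
  move=> p q hp hq e.
  have /(detect _ hp) hpq : alg_le (pi p) (pi q) by rewrite e; apply: le_refl.
  have /(detect _ hq) hqp : alg_le (pi q) (pi p) by rewrite e; apply: le_refl.
  have [pp _] := hp; have [qp _] := hq.
  case: hpq => [h1|[hI h1]]; case: hqp => [h2|[hI' h2]].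
  - exact: antiP.
  - by case: (phi_notle qp hI' hI'); apply: le_trans h2 h1.
  - by case: (phi_notle pp hI hI); apply: le_trans h1 h2.
  - by case: (phi_notle pp hI hI' h1).
split.
  move=> Y hY; case: (pi_surj Y) => y ey; case: (pgenP y) => l [lp el].
  have eY : Y = \sum_(u <- [seq pi q | q <- l]) u by rewrite big_map -(morph_sum _ pi_morph) -el ey.
  have : alg_le Y (\sum_(u <- [seq pi q | q <- l]) u) by rewrite -eY; apply: le_refl.
  case/(prime_le_sum hY) => u /mapP [q ql ->] h.
  have h' : alg_le (pi q) Y by rewrite eY; apply: le_sum_mem; apply: map_f.
  have eq : Y = pi q by apply: antiQ.
  by have [p hp ep] := prime_S (lp _ ql); exists p; rewrite // ep eq.
split.
  move=> p q hp hq; split.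
    move=> /(detect _ hp) [h|[hI h]]; apply: rt_step; split => //; first by left.
    right; split => //.
    - by move=> hIq; apply: (phi_notle (proj1 hp) hI hIq).
    - by case: hq.
    - split => // e; case: hq => _; apply; rewrite -e; exact: phiI.
  elim=> [x y [_ _ [h|[hI _ _ [h _]]]]|x|x y z _ h1 _ h2].
  - exact: pi_le.
  - by rewrite (pi_phi hI); apply: pi_le.
  - exact: le_refl.
  - exact: le_trans h1 h2.
move=> p hp; split.
  by move=> fp e; apply: fp; rewrite -piD e.
move=> fp e; have [g [gm g1 _]] := detect_free hp fp.
by move: (congr1 g e); rewrite (proj2 gm) g1.
Qed.

End Main.

Theorem mainTheorem10 (P : nmodType) (I I' : P -> Prop) (phi : P -> P)
    (Q : nmodType) (pi : P -> Q) :
  primitive_monoid P ->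
  order_ideal I -> order_ideal I' ->
  (forall x, I x -> I' x -> x = 0) ->
  ideal_iso I I' phi ->
  crowned_pushout I I' phi pi ->
  primitive_monoid Q /\
      (forall p, S_primes I' p -> is_prime (pi p)) /\
      (forall p q, S_primes I' p -> S_primes I' q -> pi p = pi q -> p = q) /\
      (forall q, is_prime q -> exists2 p, S_primes I' p & pi p = q) /\
      (forall p q, S_primes I' p -> S_primes I' q ->
         (alg_le (pi p) (pi q) <-> gen_order I I' phi p q)) /\
      (forall p, S_primes I' p -> (is_free (pi p) <-> is_free p)).
Proof.
move=> H1 H2 H3 H4 H5 H6; exact: (main_all H1 H2 H3 H4 H5 H6).
Qed.
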